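(* For all processes $s,t$ of a PTS over $A_\tau$, the weak trace metric equals the $\mathcal{L}^{\mathrm{w}}$-distance: $\mathbf{d}^{\mathrm{w}}(s,t)=D_{\mathcal{L}^{\mathrm{w}}}(s,t)$.
   Context: PTS $(\mathcal{S},A_\tau,\to)$ with $A_\tau=A\cup\{\tau\}$, finitely supported distributions; processes image-finite and finite. Computations $c=s_0\xrightarrow{a_1}\cdots\xrightarrow{a_n}s_n$ via transitions $s_{i-1}\xrightarrow{a_i}\pi_i$, $s_i\in\mathrm{supp}(\pi_i)$; $\Pr(c)=\prod\pi_i(s_i)$; $|c|=n$; $\mathrm{tr}(c)=a_1\cdots a_n\in A_\tau^\star$; maximal = not a proper prefix of another computation from the same process; $\mathcal{C}_{\max}(z)$, $\mathcal{C}_{\max}(z,\alpha)$ those with trace $\alpha$. A resolution of $s$ is a PTS $\mathcal{Z}=(Z,A_\tau,\to_{\mathcal{Z}})$ with $\mathrm{corr}\colon Z\to\mathcal{S}$ and initial state $z_s$, $\mathrm{corr}(z_s)=s$, such that $z_s$ is in no target support, every other state is in the support of a target of a transition from a different state, every $z\xrightarrow{a}_{\mathcal{Z}}\pi$ is matched by $\mathrm{corr}(z)\xrightarrow{a}\pi'$ with $\pi(z')=\pi'(\mathrm{corr}(z'))$, and each state has at most one outgoing transition; $\mathrm{res}(s)$ the set of resolutions. $TD_{\mathcal{Z}}(\alpha)=\Pr(\mathcal{C}_{\max}(z,\alpha))$, $\alpha\in A_\tau^\star$. Words $\alpha\equiv\beta$ iff they coincide after deleting all $\tau$'s. Kantorovich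 lifting $\mathcal{K}(d)(\pi,\pi')=\min_\omega\sum\omega(x,y)d(x,y)$ over couplings; Hausdorff lifting $\mathcal{H}(\hat d)(X,Y)=\max\{\sup_{x\in X}\inf_{y\in Y}\hat d(x,y),\sup_{y\in Y}\inf_{x\in X}\hat d(y,x)\}$ ($\inf\emptyset=1$, $\sup\emptyset=0$). $d_{\mathrm{w}}(\alpha,\beta)=0$ if $\alpha\equiv\beta$ else $1$; $D_{\mathrm{w}}(\mathcal{Z}_1,\mathcal{Z}_2)=\mathcal{K}(d_{\mathrm{w}})(TD_{\mathcal{Z}_1},TD_{\mathcal{Z}_2})$; $\mathbf{d}^{\mathrm{w}}(s,t)=\mathcal{H}(D_{\mathrm{w}})(\mathrm{res}(s),\mathrm{res}(t))$. Logic $\mathcal{L}^{\mathrm{w}}$: trace formulae $\Phi::=\top\mid\langle a\rangle\Phi$ with $a\in A_\tau$ (each is $\Phi_\alpha$ for a unique $\alpha$, $\Phi_\varepsilon=\top$, $\Phi_{a\alpha}=\langle a\rangle\Phi_\alpha$), $\mathrm{depth}(\Phi_\alpha)=|\alpha|$; trace distribution formulae $\bigoplus_{i\in I}r_i\Phi_i$ ($I$ finite nonempty, $\Phi_i$ pairwise distinct, $r_i\in(0,1]$, $\sum r_i=1$), identified with distributions on trace formulae. $c\models\top$ always; $c\models\langle a\rangle\Phi$ iff $c=s\xrightarrow{a}c'$ with $c'\models\Phi$. $s\models\bigoplus_i r_i\Phi_i$ iff some $\mathcal{Z}\in\mathrm{res}(s)$ with initial state $z$ satisfies $\Pr(\{c\in\mathcal{C}_{\max}(z):c\models\Phi_i,|c|=\mathrm{depth}(\Phi_i)\})=r_i$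 for all $i$; $\mathcal{L}^{\mathrm{w}}(s)$ the set of formulae satisfied by $s$. $d^{\mathrm{w}}(\Phi_\alpha,\Phi_\beta)=0$ if $\alpha\equiv\beta$ else $1$; $D^{\mathrm{w}}=\mathcal{K}(d^{\mathrm{w}})$ on trace distribution formulae; $D_{\mathcal{L}^{\mathrm{w}}}(s,t)=\mathcal{H}(D^{\mathrm{w}})(\mathcal{L}^{\mathrm{w}}(s),\mathcal{L}^{\mathrm{w}}(t))$. *)

(* Defs.v *)
From Stdlib Require Import Reals List Classical ClassicalEpsilon.
Import ListNotations.
Open Scope R_scope.

Set Implicit Arguments.

Fixpoint lsum {X : Type} (l : list X) (f : X -> R) : R :=
  match l with [] => 0 | x :: l' => f x + lsum l' f end.

Definition finset {X : Type} (P : X -> Prop) : Prop :=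
  exists l : list X, NoDup l /\ forall x, P x <-> In x l.

(* sum of f over the finite set P (0 if P is not finite; never used then) *)
Definition finsum {X : Type} (P : X -> Prop) (f : X -> R) : R :=
  match excluded_middle_informative (finset P) with
  | left H => lsum (proj1_sig (constructive_indefinite_description _ H)) f
  | right _ => 0
  end.

(* sup of a set of reals, with the convention sup emptyset = 0 *)
Definition supR (E : R -> Prop) : R :=
  match excluded_middle_informative (exists x, E x) with
  | left _ => epsilon (inhabits 0) (fun l => is_lub E l)
  | right _ => 0
  end.

(* inf of a set of reals, with the convention inf emptyset = 1 *)
Definition infR (E : R -> Prop) : R :=
  match excluded_middle_informative (exists x, E x) with
  | left _ => - epsilon (inhabits 0) (fun l => is_lub (fun x => E (- x)) l)
  | right _ => 1
  end.

Definition minR (E : R -> Prop) : R :=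
  epsilon (inhabits 0) (fun r => E r /\ forall r', E r' -> r <= r').

Definition supover {T : Type} (X : T -> Prop) (f : T -> R) : R :=
  supR (fun r => exists x, X x /\ r = f x).
Definition infover {T : Type} (X : T -> Prop) (f : T -> R) : R :=
  infR (fun r => exists x, X x /\ r = f x).

Definition supp {X : Type} (pi : X -> R) (x : X) : Prop := 0 < pi x.

Definition is_fdist {X : Type} (pi : X -> R) : Prop :=
  (forall x, 0 <= pi x) /\
  finset (fun x => pi x <> 0) /\
  finsum (fun x => pi x <> 0) pi = 1.

Definition coupling {X Y : Type} (pi : X -> R) (pi' : Y -> R)
    (w : X * Y -> R) : Prop :=
  (forall p, 0 <= w p) /\
  finset (fun p => w p <> 0) /\
  (forall x, finsum (fun y => w (x, y) <> 0) (fun y => w (x, y)) = pi x) /\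
  (forall y, finsum (fun x => w (x, y) <> 0) (fun x => w (x, y)) = pi' y).

Definition kantorovich {X : Type} (d : X -> X -> R) (pi pi' : X -> R) : R :=
  minR (fun r => exists w, coupling pi pi' w /\
          r = finsum (fun p => w p <> 0) (fun p => w p * d (fst p) (snd p))).

Definition hausdorff {T : Type} (d : T -> T -> R) (X Y : T -> Prop) : R :=
  Rmax (supover X (fun x => infover Y (fun y => d x y)))
       (supover Y (fun y => infover X (fun x => d y x))).

(* PTSs over A_tau = option A  (None = tau), computations             *)

Section Comp.
Variables (A X : Type) (trans : X -> option A -> (X -> R) -> Prop).

(* a step  --a--> (via target distribution pi) x *)
Definition step := (option A * (X -> R) * X)%type.

Fixpoint is_comp (x : X) (c : list step) : Prop :=
  match c with
  | [] => True
  | (a, pi, y) :: c' => trans x a pi /\ supp pi y /\ is_comp y c'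
  end.

Fixpoint comp_prob (c : list step) : R :=
  match c with
  | [] => 1
  | (a, pi, y) :: c' => pi y * comp_prob c'
  end.

Definition comp_trace (c : list step) : list (option A) :=
  map (fun st => fst (fst st)) c.

Definition is_max_comp (x : X) (c : list step) : Prop :=
  is_comp x c /\
  ~ (exists ext, ext <> [] /\ is_comp x (c ++ ext)).

Definition image_finite (x : X) : Prop :=
  exists l : list (option A * (X -> R)), forall a pi, trans x a pi -> In (a, pi) l.

Definition succ (y x : X) : Prop := exists a pi, trans x a pi /\ supp pi y.

Definition finite_proc (x : X) : Prop := Acc succ x.

End Comp.

Record resolution (S A : Type) := Resolution {
  rZ : Type;
  rtrans : rZ -> option A -> (rZ -> R) -> Prop;
  rcorr : rZ -> S;
  rinit : rZ
}.

Definition is_resolution {S A : Type} (trans : S -> option A -> (S -> R) -> Prop)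
    (s : S) (Z : resolution S A) : Prop :=
  (forall z a pi, rtrans Z z a pi -> is_fdist pi) /\
  rcorr Z (rinit Z) = s /\
  (forall z a pi, rtrans Z z a pi -> ~ supp pi (rinit Z)) /\
  (forall z, z <> rinit Z ->
     exists z' a pi, z' <> z /\ rtrans Z z' a pi /\ supp pi z) /\
  (forall z a pi, rtrans Z z a pi ->
     exists pi', trans (rcorr Z z) a pi' /\
       forall z', supp pi z' -> pi z' = pi' (rcorr Z z')) /\
  (forall z a1 pi1 a2 pi2, rtrans Z z a1 pi1 -> rtrans Z z a2 pi2 ->
     a1 = a2 /\ pi1 = pi2).

Definition res {S A : Type} (trans : S -> option A -> (S -> R) -> Prop) (s : S)
  : resolution S A -> Prop := is_resolution trans s.

Definition TD {S A : Type} (Z : resolution S A) (alpha : list (option A)) : R :=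
  finsum (fun c => is_max_comp (@rtrans S A Z) (rinit Z) c /\
                   comp_trace c = alpha)
         (comp_prob (X:=rZ Z)).

Definition erase_tau {A : Type} (w : list (option A)) : list A :=
  flat_map (fun o => match o with Some a => [a] | None => [] end) w.

Definition weq {A : Type} (w1 w2 : list (option A)) : Prop :=
  erase_tau w1 = erase_tau w2.

Definition d_w {A : Type} (w1 w2 : list (option A)) : R :=
  if excluded_middle_informative (weq w1 w2) then 0 else 1.

Definition D_w {S A : Type} (Z1 Z2 : resolution S A) : R :=
  kantorovich d_w (TD Z1) (TD Z2).

Definition weak_trace_metric {S A : Type}
    (trans : S -> option A -> (S -> R) -> Prop) (s t : S) : R :=
  hausdorff (@D_w S A) (res trans s) (res trans t).

Inductive tformula (A : Type) : Type :=
| TTop : tformula A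
| TDia : option A -> tformula A -> tformula A.
Arguments TTop {A}.

Fixpoint tf_word {A : Type} (phi : tformula A) : list (option A) :=
  match phi with
  | TTop => []
  | TDia a phi' => a :: tf_word phi'
  end.

Definition depth {A : Type} (phi : tformula A) : nat := length (tf_word phi).

Fixpoint csat {A X : Type} (c : list (step A X)) (phi : tformula A) : Prop :=
  match phi with
  | TTop => True
  | TDia a phi' =>
      match c with
      | [] => False
      | (a', _, _) :: c' => a = a' /\ csat c' phi'
      end
  end.

(* trace distribution formulae = finitely supported distributions on
   trace formulae: (+)_{i} r_i Phi_i with r_i = psi Phi_i > 0 *)
Definition tdformula (A : Type) := tformula A -> R.

Definition sat {S A : Type} (trans : S -> option A -> (S -> R) -> Prop)
    (s : S) (psi : tdformula A) : Prop :=
  exists Z : resolution S A, res trans s Z /\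
    forall phi, 0 < psi phi ->
      finsum (fun c => is_max_comp (@rtrans S A Z) (rinit Z) c /\
                       csat c phi /\ length c = depth phi)
             (comp_prob (X:=rZ Z)) = psi phi.

Definition Lw {S A : Type} (trans : S -> option A -> (S -> R) -> Prop) (s : S)
  : tdformula A -> Prop :=
  fun psi => is_fdist psi /\ sat trans s psi.

Definition dform_w {A : Type} (phi1 phi2 : tformula A) : R :=
  d_w (tf_word phi1) (tf_word phi2).

Definition Dform_w {A : Type} (psi1 psi2 : tdformula A) : R :=
  kantorovich dform_w psi1 psi2.

Definition D_Lw {S A : Type} (trans : S -> option A -> (S -> R) -> Prop)
    (s t : S) : R :=
  hausdorff (@Dform_w A) (Lw trans s) (Lw trans t).

(* Main.v *)
Require Import Defs.
From Stdlib Require Import Reals List Permutation FinFun Lra Classical ClassicalEpsilon FunctionalExtensionality PropExtensionality.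
Import ListNotations.
Open Scope R_scope.

Definition filterb {X : Type} (P : X -> Prop) (l : list X) : list X :=
  filter (fun x => if excluded_middle_informative (P x) then true else false) l.

Lemma filterb_In {X} (P : X -> Prop) l x : In x (filterb P l) <-> In x l /\ P x.
Proof.
  unfold filterb; rewrite filter_In.
  destruct (excluded_middle_informative (P x)); intuition congruence.
Qed.

Lemma filterb_NoDup {X} (P : X -> Prop) l : NoDup l -> NoDup (filterb P l).
Proof. apply NoDup_filter. Qed.

Lemma lsum_app {X} (l1 l2 : list X) f : lsum (l1 ++ l2) f = lsum l1 f + lsum l2 f.
Proof. induction l1; simpl; [ring | rewrite IHl1; ring]. Qed.

Lemma lsum_perm {X} (l1 l2 : list X) f : Permutation l1 l2 -> lsum l1 f = lsum l2 f.
Proof. induction 1; simpl; try ring; congruence. Qed.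

Lemma lsum_ext {X} (l : list X) f g : (forall x, In x l -> f x = g x) -> lsum l f = lsum l g.
Proof.
  induction l; simpl; intros H; auto.
  rewrite H by auto. rewrite IHl by auto. reflexivity.
Qed.

Lemma lsum_zero {X} (l : list X) f : (forall x, In x l -> f x = 0) -> lsum l f = 0.
Proof.
  induction l; simpl; intros H; auto.
  rewrite H by auto. rewrite IHl by auto. ring.
Qed.

Lemma lsum_nonneg {X} (l : list X) f : (forall x, In x l -> 0 <= f x) -> 0 <= lsum l f.
Proof.
  induction l; simpl; intros H; [lra|].
  pose proof (H a (or_introl eq_refl)). pose proof (IHl (fun x h => H x (or_intror h))). lra.
Qed.

Lemma lsum_plus {X} (l : list X) f g : lsum l (fun x => f x + g x) = lsum l f + lsum l g.
Proof. induction l; simpl; [ring| rewrite IHl; ring]. Qed.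

Lemma lsum_map {X Y} (u : X -> Y) l g : lsum (map u l) g = lsum l (fun x => g (u x)).
Proof. induction l; simpl; congruence. Qed.

Lemma lsum_split {X} (P : X -> Prop) l f :
  lsum l f = lsum (filterb P l) f + lsum (filterb (fun x => ~ P x) l) f.
Proof.
  induction l; simpl; [ring|]. unfold filterb in *; simpl.
  destruct (excluded_middle_informative (P a));
  destruct (excluded_middle_informative (~ P a)); try tauto; simpl; rewrite IHl; ring.
Qed.

Lemma finsum_enum {X} (P : X -> Prop) f l :
  NoDup l -> (forall x, P x <-> In x l) -> finsum P f = lsum l f.
Proof.
  intros Hn Hi. unfold finsum.
  destruct (excluded_middle_informative (finset P)) as [H|H].
  - destruct (constructive_indefinite_description _ H) as [l' [Hn' Hi']]; simpl.
    apply lsum_perm, NoDup_Permutation; auto. intro x; rewrite <- Hi, Hi'; tauto.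
  - exfalso; apply H; exists l; auto.
Qed.

Lemma finsum_superset {X} (P : X -> Prop) f L :
  NoDup L -> (forall x, P x -> In x L) -> (forall x, In x L -> ~ P x -> f x = 0) ->
  finsum P f = lsum L f.
Proof.
  intros Hn Hs Hz.
  rewrite (finsum_enum P f (filterb P L)).
  - rewrite (lsum_split P L f). rewrite (lsum_zero (filterb (fun x => ~ P x) L)). ring.
    intros x Hx; apply filterb_In in Hx; apply Hz; tauto.
  - apply filterb_NoDup; auto.
  - intro x; rewrite filterb_In; firstorder.
Qed.

Lemma lsum_incl_le {X} (l1 l2 : list X) f :
  NoDup l1 -> NoDup l2 -> incl l1 l2 -> (forall x, In x l2 -> 0 <= f x) ->
  lsum l1 f <= lsum l2 f.
Proof.
  intros H1 H2 Hi Hp.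
  rewrite (lsum_split (fun x => In x l1) l2 f).
  rewrite (lsum_perm l1 (filterb (fun x => In x l1) l2)).
  - assert (0 <= lsum (filterb (fun x => ~ In x l1) l2) f).
    { apply lsum_nonneg; intros x Hx; apply filterb_In in Hx; apply Hp; tauto. }
    lra.
  - apply NoDup_Permutation; auto. apply filterb_NoDup; auto.
    intro x; rewrite filterb_In; split; intuition.
Qed.

Lemma exists_nodup {X} (l : list X) : exists L, NoDup L /\ forall x, In x L <-> In x l.
Proof.
  induction l as [|a l [L [Hn Hi]]].
  - exists []; split; [constructor| simpl; tauto].
  - destruct (classic (In a L)).
    + exists L; split; auto. intro x; simpl; rewrite Hi. split; [tauto|].
      intros [<-|]; auto. apply Hi; auto.
    + exists (a :: L); split; [constructor; auto|]. intro x; simpl; rewrite Hi; tauto.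
Qed.

Lemma lsum_indicator {X} (L : list X) x v :
  NoDup L -> In x L -> lsum L (fun b => if excluded_middle_informative (x = b) then v else 0) = v.
Proof.
  induction L as [|b L IH]; simpl; [tauto|]. intros Hn Hin. inversion Hn; subst.
  destruct (excluded_middle_informative (x = b)).
  - subst. rewrite lsum_zero. ring. intros y Hy.
    destruct (excluded_middle_informative (b = y)); subst; tauto.
  - destruct Hin as [->|Hin]; [tauto|]. rewrite IH; auto; ring.
Qed.

Lemma grouping {X B} (g : X -> B) (f : X -> R) (L : list B) M :
  NoDup L -> (forall c, In c M -> In (g c) L) ->
  lsum L (fun b => lsum (filterb (fun c => g c = b) M) f) = lsum M f.
Proof.
  intros HL. induction M as [|c M IH]; intros HM; simpl.
  - apply lsum_zero; auto.
  - rewrite <- IH by (intros; apply HM; simpl; auto).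
    rewrite (lsum_ext L _ (fun b => (if excluded_middle_informative (g c = b) then f c else 0)
               + lsum (filterb (fun c => g c = b) M) f)).
    + rewrite lsum_plus, lsum_indicator; auto. apply HM; simpl; auto.
    + intros b _. unfold filterb; simpl.
      destruct (excluded_middle_informative (g c = b)); simpl; ring.
Qed.

Lemma push {X B} (M : list X) (f : X -> R) (g : X -> B) (G : B -> R) :
  NoDup M -> (forall c, In c M -> 0 <= f c) -> lsum M f = 1 ->
  (forall b, G b = lsum (filterb (fun c => g c = b) M) f) -> is_fdist G.
Proof.
  intros HM Hp H1 HG.
  destruct (exists_nodup (map g M)) as [L [HL HLi]].
  assert (Hsub : forall b, G b <> 0 -> In b L).
  { intros b Hb. apply HLi. apply NNPP; intro Hn. apply Hb. rewrite HG.
    destruct (filterb (fun c => g c = b) M) eqn:E; simpl; auto.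
    exfalso. assert (In x (filterb (fun c => g c = b) M)) by (rewrite E; simpl; auto).
    apply filterb_In in H as [H' <-]. apply Hn, in_map; auto. }
  split; [|split].
  - intro b; rewrite HG; apply lsum_nonneg; intros x Hx; apply filterb_In in Hx; apply Hp; tauto.
  - exists (filterb (fun b => G b <> 0) L); split. apply filterb_NoDup; auto.
    intro b; rewrite filterb_In; firstorder.
  - rewrite (finsum_superset _ _ L); auto.
    + rewrite (lsum_ext L G _ (fun b _ => HG b)). rewrite grouping; auto.
      intros c Hc; apply HLi, in_map; auto.
    + intros x _ Hx; apply NNPP; auto.
Qed.

Section Bij.
Variables (X Y : Type) (u : X -> Y) (v : Y -> X).
Hypotheses (Hvu : forall x, v (u x) = x) (Huv : forall y, u (v y) = y).

Lemma finset_bij (P : X -> Prop) : finset P -> finset (fun y => P (v y)).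
Proof.
  intros [l [Hn Hi]]. exists (map u l); split.
  - apply Injective_map_NoDup; auto. intros a b E. rewrite <- (Hvu a), <- (Hvu b), E; auto.
  - intro y. rewrite in_map_iff, Hi. split.
    + intros H; exists (v y); auto.
    + intros [x [<- Hx]]. rewrite Hvu; auto.
Qed.

Lemma finsum_bij (P : X -> Prop) f :
  finsum P f = finsum (fun y => P (v y)) (fun y => f (v y)).
Proof.
  destruct (classic (finset P)) as [[l [Hn Hi]] | Hn].
  - rewrite (finsum_enum P f l Hn Hi).
    rewrite (finsum_enum _ _ (map u l)).
    + rewrite lsum_map. apply lsum_ext; intros; rewrite Hvu; auto.
    + apply Injective_map_NoDup; auto. intros a b E. rewrite <- (Hvu a), <- (Hvu b), E; auto.
    + intro y. rewrite in_map_iff, Hi. split.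
      * intros H; exists (v y); auto.
      * intros [x [<- Hx]]. rewrite Hvu; auto.
  - unfold finsum. destruct (excluded_middle_informative (finset P)); [tauto|].
    destruct (excluded_middle_informative (finset (fun y => P (v y)))) as [H|]; auto.
    exfalso; apply Hn. destruct H as [l [Hl Hi]]. exists (map v l); split.
    + apply Injective_map_NoDup; auto. intros a b E. rewrite <- (Huv a), <- (Huv b), E; auto.
    + intro x. rewrite in_map_iff. split.
      * intros H; exists (u x); rewrite Hvu; split; auto. apply Hi; rewrite Hvu; auto.
      * intros [y [<- Hy]]. apply Hi; auto.
Qed.
End Bij.

Definition Val {X} (d : X -> X -> R) (pi pi' : X -> R) : R -> Prop :=
  fun r => exists w, coupling pi pi' w /\
          r = finsum (fun p => w p <> 0) (fun p => w p * d (fst p) (snd p)).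

Lemma val_transport {X Y} (u : X -> Y) (v : Y -> X)
  (Hvu : forall x, v (u x) = x) (Huv : forall y, u (v y) = y) d pi pi' r :
  Val d pi pi' r -> Val (fun a b => d (v a) (v b)) (fun y => pi (v y)) (fun y => pi' (v y)) r.
Proof.
  intros [w [[H0 [Hf [H1 H2]]] Hr]].
  set (U := fun p : X * X => (u (fst p), u (snd p))).
  set (V := fun q : Y * Y => (v (fst q), v (snd q))).
  assert (HVU : forall p, V (U p) = p) by (intros [a b]; unfold U, V; simpl; rewrite !Hvu; auto).
  assert (HUV : forall q, U (V q) = q) by (intros [a b]; unfold U, V; simpl; rewrite !Huv; auto).
  exists (fun q => w (V q)). split; [split; [|split; [|split]]|].
  - intros; apply H0.
  - apply (finset_bij _ _ U V HVU HUV (fun p => w p <> 0)); auto.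
  - intro x. rewrite <- (H1 (v x)). symmetry.
    apply (finsum_bij _ _ u v Hvu Huv (fun y0 => w (v x, y0) <> 0) (fun y0 => w (v x, y0))).
  - intro y. rewrite <- (H2 (v y)). symmetry.
    apply (finsum_bij _ _ u v Hvu Huv (fun y0 => w (y0, v y) <> 0) (fun y0 => w (y0, v y))).
  - rewrite Hr.
    apply (finsum_bij _ _ U V HVU HUV (fun p => w p <> 0) (fun p => w p * d (fst p) (snd p))).
Qed.

Lemma kant_transport {X Y} (u : X -> Y) (v : Y -> X)
  (Hvu : forall x, v (u x) = x) (Huv : forall y, u (v y) = y) d pi pi' :
  kantorovich d pi pi' =
  kantorovich (fun a b => d (v a) (v b)) (fun y => pi (v y)) (fun y => pi' (v y)).
Proof.
  unfold kantorovich. f_equal. apply functional_extensionality; intro r.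
  apply propositional_extensionality. split.
  - apply (val_transport u v Hvu Huv d pi pi' r).
  - intro H. pose proof (val_transport v u Huv Hvu (fun a b => d (v a) (v b)) (fun y => pi (v y)) (fun y => pi' (v y)) r H) as H'.
    assert (E1 : (fun a b => d (v (u a)) (v (u b))) = d).
    { apply functional_extensionality; intro a; apply functional_extensionality; intro b.
      rewrite !Hvu; auto. }
    assert (E2 : forall p : X -> R, (fun x => p (v (u x))) = p).
    { intro p; apply functional_extensionality; intro; rewrite Hvu; auto. }
    cbv beta in H'. rewrite E1, !E2 in H'. exact H'.
Qed.

Section Haus.
Variables (T T' : Type) (F : T -> T') (d : T -> T -> R) (d' : T' -> T' -> R).
Hypothesis Hd : forall a b, d' (F a) (F b) = d a b.

Lemma inf_eq (Y : T -> Prop) (Y' : T' -> Prop) x :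
  (forall y, Y y -> Y' (F y)) -> (forall y', Y' y' -> exists y, Y y /\ F y = y') ->
  infover Y (fun y => d x y) = infover Y' (fun y' => d' (F x) y').
Proof.
  intros H1 H2. unfold infover. f_equal. apply functional_extensionality; intro r.
  apply propositional_extensionality. split.
  - intros [y [Hy ->]]. exists (F y); rewrite Hd; auto.
  - intros [y' [Hy ->]]. destruct (H2 y' Hy) as [y [Hy2 <-]]. exists y; rewrite Hd; auto.
Qed.

Lemma sup_inf_eq (X Y : T -> Prop) (X' Y' : T' -> Prop) :
  (forall y, X y -> X' (F y)) -> (forall y', X' y' -> exists y, X y /\ F y = y') ->
  (forall y, Y y -> Y' (F y)) -> (forall y', Y' y' -> exists y, Y y /\ F y = y') ->
  supover X (fun x => infover Y (fun y => d x y)) =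
  supover X' (fun x' => infover Y' (fun y' => d' x' y')).
Proof.
  intros H1 H2 H3 H4. unfold supover. f_equal. apply functional_extensionality; intro r.
  apply propositional_extensionality. split.
  - intros [x [Hx ->]]. exists (F x); split; auto. apply inf_eq; auto.
  - intros [x' [Hx ->]]. destruct (H2 x' Hx) as [x [Hx2 <-]]. exists x; split; auto.
    symmetry; apply inf_eq; auto.
Qed.
End Haus.

Lemma haus_transport {T T'} (F : T -> T') (d : T -> T -> R) (d' : T' -> T' -> R)
  (X Y : T -> Prop) (X' Y' : T' -> Prop) :
  (forall a b, d' (F a) (F b) = d a b) ->
  (forall y, X y -> X' (F y)) -> (forall y', X' y' -> exists y, X y /\ F y = y') ->
  (forall y, Y y -> Y' (F y)) -> (forall y', Y' y' -> exists y, Y y /\ F y = y') ->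
  hausdorff d X Y = hausdorff d' X' Y'.
Proof.
  intros. unfold hausdorff. f_equal; apply (sup_inf_eq T T' F d d'); auto.
Qed.

Lemma lsum_map_cons {A X} (a : option A) (pi : X -> R) y (l : list (list (step A X))) :
  lsum (map (cons (a, pi, y)) l) (@comp_prob A X) = pi y * lsum l (@comp_prob A X).
Proof. induction l; simpl; [ring| rewrite IHl; ring]. Qed.

Section Tree.
Variables (A X : Type) (tr : X -> option A -> (X -> R) -> Prop).
Hypothesis Hfd : forall x a pi, tr x a pi -> is_fdist pi.
Hypothesis Hun : forall x a1 p1 a2 p2, tr x a1 p1 -> tr x a2 p2 -> a1 = a2 /\ p1 = p2.

Lemma tree_max : forall x, Acc (succ tr) x ->
  exists M, NoDup M /\ (forall c, is_max_comp tr x c <-> In c M) /\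
    (forall c, In c M -> 0 <= comp_prob c) /\ lsum M (@comp_prob A X) = 1.
Proof.
  intros x Hacc. induction Hacc as [x _ IH].
  destruct (classic (exists a pi, tr x a pi)) as [[a [pi Ht]] | Hno].
  - destruct (Hfd _ _ _ Ht) as [Hp [[Y [HYn HYi]] Hs]].
    rewrite (finsum_enum _ _ Y HYn HYi) in Hs.
    assert (HY : forall y, In y Y <-> supp pi y).
    { intro y; rewrite <- HYi; unfold supp; pose proof (Hp y); split; intro; lra. }
    assert (Hclaim : forall Y', NoDup Y' -> incl Y' Y -> exists N, NoDup N /\
      (forall c, (exists y c', In y Y' /\ c = (a, pi, y) :: c' /\ is_max_comp tr y c') <-> In c N) /\
      (forall c, In c N -> 0 <= comp_prob c) /\ lsum N (@comp_prob A X) = lsum Y' pi).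
    { induction Y' as [|y Y' IHY]; intros Hn Hinc.
      - exists []; split; [constructor|]. split; [|split; [simpl; tauto| reflexivity]].
        intro c; simpl; split; [intros [? [? [[] _]]] | tauto].
      - inversion Hn; subst.
        destruct IHY as [N [HNn [HNi [HNp HNs]]]]; auto. { intros z Hz; apply Hinc; simpl; auto. }
        assert (Hsy : supp pi y) by (apply HY, Hinc; simpl; auto).
        destruct (IH y) as [My [HMn [HMi [HMp HMs]]]]. { exists a, pi; auto. }
        exists (map (cons (a, pi, y)) My ++ N). split; [|split; [|split]].
        + apply NoDup_app; auto.
          * apply Injective_map_NoDup; auto. intros c1 c2 E; injection E; auto.
          * intros c Hc1 Hc2. apply in_map_iff in Hc1 as [c' [<- _]].
            apply HNi in Hc2 as [y' [c'' [Hy' [E _]]]]. injection E; intros; subst; auto.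
        + intro c. rewrite in_app_iff, <- HNi, in_map_iff. split.
          * intros [y0 [c' [[<-|Hy0] [-> Hm]]]].
            -- left. exists c'; split; auto. apply HMi; auto.
            -- right. exists y0, c'; auto.
          * intros [[c' [<- Hc']] | [y0 [c' [Hy0 [-> Hm]]]]].
            -- exists y, c'; split; [simpl; auto|]. split; auto. apply HMi; auto.
            -- exists y0, c'; simpl; auto.
        + intros c Hc. apply in_app_iff in Hc as [Hc|Hc]; auto.
          apply in_map_iff in Hc as [c' [<- Hc']]. simpl.
          pose proof (HMp c' Hc'). pose proof (Hp y). apply Rmult_le_pos; auto.
        + rewrite lsum_app, lsum_map_cons, HMs, HNs. simpl. ring. }
    destruct (Hclaim Y HYn (incl_refl _)) as [N [HNn [HNi [HNp HNs]]]].
    exists N. split. exact HNn. split. 2: split. 2: exact HNp. 2: { etransitivity; [exact HNs| exact Hs]. }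
    intro c. rewrite <- HNi. split.
    + intros [Hc Hnm]. destruct c as [|[[a' pi'] y] c'].
      * exfalso. destruct Y as [|y0 Y0]; [simpl in Hs; lra|].
        apply Hnm. exists [(a, pi, y0)]. split; [congruence|]. simpl.
        split; auto. split; auto. apply HY; simpl; auto.
      * destruct Hc as [Ht' [Hsy Hc']]. destruct (Hun _ _ _ _ _ Ht Ht') as [<- <-].
        exists y, c'. split; [apply HY; auto|]. split; auto. split; auto.
        intros [ext [Hne Hext]]. apply Hnm. exists ext; split; auto. simpl; auto.
    + intros [y [c' [Hy [-> [Hc' Hnm]]]]]. split.
      * simpl. split; auto. split; auto. apply HY; auto.
      * intros [ext [Hne [_ [_ Hext]]]]. apply Hnm. exists ext; auto.
  - exists [[]]. split; [constructor; [simpl; tauto| constructor]|].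
    split; [|split; [intros c [<-|[]]; simpl; lra| simpl; ring]].
    intro c. simpl. split.
    + intros [Hc Hnm]. destruct c as [|[[a pi] y] c']; auto.
      exfalso; apply Hno; exists a, pi; apply Hc.
    + intros [<-|[]]. split; simpl; auto. intros [ext [Hne Hext]].
      destruct ext as [|[[a pi] y] e]; [congruence|]. apply Hno; exists a, pi; apply Hext.
Qed.
End Tree.

Definition unword {A} (l : list (option A)) : tformula A := fold_right (@TDia A) TTop l.

Lemma word_unword {A} (l : list (option A)) : tf_word (unword l) = l.
Proof. induction l; simpl; congruence. Qed.
Lemma unword_word {A} (p : tformula A) : unword (tf_word p) = p.
Proof. induction p; simpl; congruence. Qed.

Lemma csat_iff {A X} (phi : tformula A) : forall (c : list (step A X)),
  (csat c phi /\ length c = depth phi) <-> comp_trace c = tf_word phi.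
Proof.
  unfold depth, comp_trace. induction phi as [|a phi IH]; intros c; simpl.
  - destruct c; simpl; split; intuition congruence.
  - destruct c as [|[[a' pi] y] c']; simpl; [split; intuition congruence|].
    specialize (IH c'). split.
    + intros [[-> H] E]. injection E; intros E'. f_equal. apply IH; auto.
    + intros E; injection E; intros E1 E2; subst. apply IH in E1. intuition.
Qed.

Section Main.
Variables (S A : Type) (trans : S -> option A -> (S -> R) -> Prop).
Hypothesis Hfin : forall s, finite_proc trans s.

Definition FZ (Z : resolution S A) : tdformula A := fun phi => TD Z (tf_word phi).

Lemma res_acc s Z : is_resolution trans s Z -> forall z, Acc (succ (rtrans Z)) z.
Proof.
  intros [_ [_ [_ [_ [Hm _]]]]].
  assert (forall s0, Acc (succ trans) s0 -> forall z, rcorr Z z = s0 -> Acc (succ (rtrans Z)) z).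
  { intros s0 H. induction H as [s0 _ IH]. intros z Ez. constructor.
    intros y [a [pi [Ht Hs]]]. destruct (Hm _ _ _ Ht) as [pi' [Ht' Hpi]].
    apply (IH (rcorr Z y)); auto. exists a, pi'. subst. split; auto.
    unfold supp in *. rewrite <- Hpi; auto. }
  intro z; apply (H (rcorr Z z)); auto. apply Hfin.
Qed.

Lemma FZ_fdist s Z : is_resolution trans s Z -> is_fdist (FZ Z).
Proof.
  intros HR. pose proof HR as [Hfd [_ [_ [_ [_ Hun]]]]].
  destruct (tree_max A (rZ Z) (rtrans Z) Hfd Hun (rinit Z) (res_acc s Z HR (rinit Z)))
    as [M [HMn [HMi [HMp HMs]]]].
  apply (push M (@comp_prob A (rZ Z)) (fun c => unword (comp_trace c))); auto.
  intro phi. unfold FZ, TD. apply finsum_enum. apply filterb_NoDup; auto.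
  intro c. rewrite filterb_In, <- HMi. split; intros [H1 H2]; split; auto.
  - rewrite H2, unword_word; auto.
  - rewrite <- H2, word_unword; auto.
Qed.

Lemma sat_eq (Z : resolution S A) phi :
  finsum (fun c => is_max_comp (@rtrans S A Z) (rinit Z) c /\
                   csat c phi /\ length c = depth phi) (comp_prob (X:=rZ Z)) = FZ Z phi.
Proof.
  unfold FZ, TD. f_equal. apply functional_extensionality; intro c.
  apply propositional_extensionality. rewrite <- csat_iff. tauto.
Qed.

Lemma FZ_in s Z : res trans s Z -> Lw trans s (FZ Z).
Proof.
  intros HR. split. apply (FZ_fdist s Z HR).
  exists Z; split; auto. intros phi _. apply sat_eq.
Qed.

Lemma FZ_surj s psi : Lw trans s psi -> exists Z, res trans s Z /\ FZ Z = psi.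
Proof.
  intros [[Hp [[Lp [HLpn HLpi]] Hs]] [Z [HR Hsat]]].
  exists Z; split; auto.
  pose proof (FZ_fdist s Z HR) as [Fp [[Lf [HLfn HLfi]] Fs]].
  rewrite (finsum_enum _ _ _ HLpn HLpi) in Hs.
  rewrite (finsum_enum _ _ _ HLfn HLfi) in Fs.
  assert (Hpos : forall phi, 0 < psi phi -> FZ Z phi = psi phi).
  { intros phi H. rewrite <- sat_eq. apply Hsat; auto. }
  apply functional_extensionality; intro phi.
  destruct (Rlt_dec 0 (psi phi)) as [H|H]; [apply Hpos; auto|].
  assert (E : psi phi = 0) by (pose proof (Hp phi); lra). rewrite E.
  apply NNPP; intro Hne.
  assert (Hle : lsum (phi :: Lp) (FZ Z) <= lsum Lf (FZ Z)).
  { apply lsum_incl_le.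
    - constructor; auto. rewrite <- HLpi; auto.
    - exact HLfn.
    - intros x [<-|Hx]; apply HLfi; auto.
      apply HLpi in Hx. rewrite Hpos; auto. pose proof (Hp x); lra.
    - intros; apply Fp. }
  simpl in Hle. rewrite (lsum_ext Lp (FZ Z) psi) in Hle.
  - pose proof (Fp phi). lra.
  - intros x Hx. apply HLpi in Hx. apply Hpos. pose proof (Hp x); lra.
Qed.

End Main.

Theorem theorem18 (S A : Type) (trans : S -> option A -> (S -> R) -> Prop)
  (Hdist : forall s a pi, trans s a pi -> is_fdist pi)
  (Himg : forall s, image_finite trans s)
  (Hfin : forall s, finite_proc trans s)
  (s t : S) :
  weak_trace_metric trans s t = D_Lw trans s t.
Proof.
  unfold weak_trace_metric, D_Lw.
  apply (haus_transport (FZ S A)).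
  - intros a b. unfold Dform_w, D_w, FZ.
    symmetry. apply (kant_transport (@unword A) (@tf_word A)).
    + apply word_unword.
    + apply unword_word.
  - intros Z HZ. apply (FZ_in S A trans Hfin s Z HZ).
  - intros psi H. apply (FZ_surj S A trans Hfin s psi H).
  - intros Z HZ. apply (FZ_in S A trans Hfin t Z HZ).
  - intros psi H. apply (FZ_surj S A trans Hfin t psi H).
Qed.
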